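(* Let $\mathcal{N}$ be a deterministic negotiation such that for every node $n\in N$ that is reachable from $n_{\mathit{init}}$ by a local path, and every process $p\in\mathit{dom}(n)$, there exists a $p$-path from $n$ to $n_{\mathit{fin}}$. Then $\mathcal{N}$ is unsound if and only if some initial run leads to a deadlock configuration.
   Context: A negotiation is a tuple $\mathcal{N}=(\mathit{Proc},N,\mathit{dom},R,\delta)$ where $\mathit{Proc}$ is a finite set of processes, $N$ is a finite set of nodes (atomic negotiations), $\mathit{dom}:N\to 2^{\mathit{Proc}}\setminus\{\emptyset\}$, there are two distinguished nodes $n_{\mathit{init}},n_{\mathit{fin}}$ with $\mathit{dom}(n_{\mathit{init}})=\mathit{dom}(n_{\mathit{fin}})=\mathit{Proc}$, $R$ is a set of results, each node $n$ has a set $\mathit{out}(n)\subseteq R$ of results (nonempty for $n\neq n_{\mathit{fin}}$), and $\delta(n,a,p)\subseteq N$ is defined and nonempty exactly when $a\in\mathit{out}(n)$ and $p\in\mathit{dom}(n)$, with $p\in\mathit{dom}(n')$ for all $n'\in\delta(n,a,p)$. A configuration is a map $C$ assigning to each process a nonempty set of nodes; $C_{\mathit{init}}(p)=\{n_{\mathit{init}}\}$ and $C_{\mathit{fin}}(p)=\{n_{\mathit{fin}}\}$ for all $p$. A node $n$ is enabled in $C$ if $n\in C(p)$ for all $p\in\mathit{dom}(n)$; $C$ is a deadlock if no node is enabled in it. If $n$ is enabled in $C$ and $a\in\mathit{out}(n)$, then $C\xrightarrow{(n,a)}C'$ where $C'(p)=\delta(n,a,p)$ for $p\in\mathit{dom}(n)$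 and $C'(p)=C(p)$ otherwise. A run from $C_1$ is a finite or infinite sequence $(n_1,a_1)(n_2,a_2)\cdots$ with $C_1\xrightarrow{(n_1,a_1)}C_2\xrightarrow{(n_2,a_2)}\cdots$; a run is initial if it starts at $C_{\mathit{init}}$, and successful if it is initial, finite and ends in $C_{\mathit{fin}}$. $\mathcal{N}$ is sound if every finite initial run can be extended to a successful run. The graph of $\mathcal{N}$ has vertex set $N$ and an edge $n\xrightarrow{p,a}n'$ whenever $n'\in\delta(n,a,p)$. A local path is a path $n_0\xrightarrow{p_0,a_0}n_1\cdots\xrightarrow{p_{k-1},a_{k-1}}n_k$ in this graph; it is a $p$-path if $p_0=\dots=p_{k-1}=p$. A process $p$ is deterministic if $\delta(n,a,p)$ is a singleton for all $n$ with $p\in\mathit{dom}(n)$ and all $a\in\mathit{out}(n)$; $\mathcal{N}$ is deterministic if every process is deterministic. *)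

(* Defs.v *)
From mathcomp Require Import all_boot.
From Stdlib Require Import Relation_Operators.
Set Implicit Arguments. Unset Strict Implicit. Unset Printing Implicit Defensive.

(* A negotiation with process type P, node type N, result type R.
   delta n a p is encoded as the empty set when it is undefined
   (i.e. when a \notin out n or p \notin dom n). *)
Record negotiation (P N R : finType) := Negotiation {
  dom : N -> {set P};
  n_init : N;
  n_fin : N;
  out : N -> {set R};
  delta : N -> R -> P -> {set N}
}.

Section Neg.
Variables (P N R : finType) (G : negotiation P N R).

Definition wf_negotiation : Prop :=
  [/\ (forall n, dom G n != set0),
      n_init G != n_fin G,
      dom G (n_init G) = [set: P] /\ dom G (n_fin G) = [set: P],
      (forall n, n != n_fin G -> out G n != set0) &
      (forall n a p,
         if (a \in out G n) && (p \in dom G n) then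
           delta G n a p != set0 /\
           (forall n', n' \in delta G n a p -> p \in dom G n')
         else delta G n a p = set0)].

Definition config := {ffun P -> {set N}}.

Definition C_init : config := [ffun => [set n_init G]].
Definition C_fin : config := [ffun => [set n_fin G]].

Definition enabled (n : N) (C : config) : Prop :=
  forall p, p \in dom G n -> n \in C p.

Definition deadlock (C : config) : Prop := forall n, ~ enabled n C.

Definition step (C : config) (na : N * R) (C' : config) : Prop :=
  let: (n, a) := na in
  [/\ enabled n C, a \in out G n &
      C' = [ffun p => if p \in dom G n then delta G n a p else C p]].

Inductive is_run : config -> seq (N * R) -> config -> Prop :=
| run_nil C : is_run C [::] C
| run_cons C na C' s C'' :
    step C na C' -> is_run C' s C'' -> is_run C (na :: s) C''.

Definition sound : Prop :=
  forall s C, is_run C_init s C -> exists s', is_run C s' C_fin.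

Definition edge (p : P) (a : R) (n n' : N) : Prop :=
  [/\ a \in out G n, p \in dom G n & n' \in delta G n a p].

Definition local_reach : N -> N -> Prop :=
  clos_refl_trans N (fun n n' => exists p a, edge p a n n').

Definition p_reach (p : P) : N -> N -> Prop :=
  clos_refl_trans N (fun n n' => exists a, edge p a n n').

Definition deterministic : Prop :=
  forall n a p, p \in dom G n -> a \in out G n -> #|delta G n a p| = 1.

End Neg.

(* Main.v *)
From Stdlib Require Import Relation_Operators Operators_Properties Classical ClassicalEpsilon.
Require Import Defs.
From mathcomp Require Import all_boot.

Set Implicit Arguments. Unset Strict Implicit. Unset Printing Implicit Defensive.

Definition reach (P N R : finType) (G : negotiation P N R) (C C' : config P N) :=
  exists s, is_run G C s C'.

Definition rb (X : Prop) : bool :=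
  if excluded_middle_informative X then true else false.

Lemma rbP (X : Prop) : reflect X (rb X).
Proof. rewrite /rb; case: excluded_middle_informative => h; by constructor. Qed.

Lemma reach_refl (P N R : finType) (G : negotiation P N R) C : reach G C C.
Proof. exists [::]; constructor. Qed.

Lemma run_cat (P N R : finType) (G : negotiation P N R) C s C' t C'' :
  is_run G C s C' -> is_run G C' t C'' -> is_run G C (s ++ t) C''.
Proof.
elim=> [//|C0 na C1 s0 C2 hst _ IH] ht /=.
econstructor; [exact: hst| exact: IH].
Qed.

Lemma reach_trans (P N R : finType) (G : negotiation P N R) C C' C'' :
  reach G C C' -> reach G C' C'' -> reach G C C''.
Proof. move=> [s hs] [t ht]; exists (s ++ t); exact: run_cat hs ht. Qed.

Lemma reach_step (P N R : finType) (G : negotiation P N R) C na C' :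
  step G C na C' -> reach G C C'.
Proof. move=> h; exists [:: na]; econstructor; [exact: h| constructor]. Qed.

Lemma terminal_exists (P N R : finType) (G : negotiation P N R) C :
  exists K, reach G C K /\ forall K', reach G K K' -> reach G K' K.
Proof.
pose rs (C : config P N) := [set C' : config P N | rb (reach G C C')].
suff: forall k C, #|rs C| <= k ->
  exists K, reach G C K /\ forall K', reach G K K' -> reach G K' K.
  by move=> /(_ _ C (leqnn _)).
elim=> [|k IH] C0 Hk.
  case: (classic (forall K', reach G C0 K' -> reach G K' C0)) => H.
    by exists C0; split => //; apply: reach_refl.
  have [K' HK'n] := not_all_ex_not _ _ H; have [HK' HnK'] := imply_to_and _ _ HK'n.
  have Hlt : #|rs K'| < #|rs C0| by apply: proper_card; apply/properP; split;
    [apply/subsetP => x; rewrite !inE => /rbP hx; apply/rbP;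
       exact: reach_trans HK' hx
    | exists C0; rewrite inE; apply/rbP; [exact: reach_refl| exact: HnK']].
  by have := leq_trans Hlt Hk.
case: (classic (forall K', reach G C0 K' -> reach G K' C0)) => H.
  by exists C0; split => //; apply: reach_refl.
have [K' HK'n] := not_all_ex_not _ _ H; have [HK' HnK'] := imply_to_and _ _ HK'n.
have Hlt : #|rs K'| < #|rs C0| by apply: proper_card; apply/properP; split;
  [apply/subsetP => x; rewrite !inE => /rbP hx; apply/rbP;
     exact: reach_trans HK' hx
  | exists C0; rewrite inE; apply/rbP; [exact: reach_refl| exact: HnK']].
have hk : #|rs K'| <= k by rewrite -ltnS; exact: leq_trans Hlt Hk.
have [K [h1 h2]] := IH K' hk.
exists K; split => //; exact: reach_trans HK' h1.
Qed.

Definition good (P N R : finType) (G : negotiation P N R) (C : config P N) :=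
  forall q, exists x, C q = [set x] /\ local_reach G (n_init G) x.

Lemma good_init (P N R : finType) (G : negotiation P N R) : good G (C_init G).
Proof. move=> q; exists (n_init G); rewrite ffunE; split => //; apply: rt_refl. Qed.

Lemma good_step (P N R : finType) (G : negotiation P N R) C na C' :
  deterministic G -> good G C -> step G C na C' -> good G C'.
Proof.
case: na => n a Hdet Hg [Hen Ha ->] q; rewrite ffunE.
case: ifP => hq; last exact: Hg.
have [x [hx hl]] := Hg q.
have := Hen q hq; rewrite hx inE => /eqP ex; subst x.
have /eqP/cards1P [y hy] := Hdet n a q hq Ha.
exists y; split => //.
apply: rt_trans hl _; apply: rt_step; exists q, a; split => //.
by rewrite hy inE.
Qed.

Lemma good_run (P N R : finType) (G : negotiation P N R) C s C' :
  deterministic G -> good G C -> is_run G C s C' -> good G C'.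
Proof.
move=> Hdet Hg Hr; elim: Hr Hg => [//|C0 na C1 s0 C2 hst _ IH] Hg.
apply: IH; exact: good_step hst.
Qed.

Lemma leave (P N R : finType) (G : negotiation P N R) K' s K p m :
  is_run G K' s K -> K' p = [set m] -> K p != [set m] ->
  exists K3, reach G K' K3 /\ K3 p = [set m] /\ enabled G m K3.
Proof.
elim=> [C0 -> /eqP//|C0 [n0 a0] C1 s0 C2 hst hr IH] h0 h2.
case hp: (p \in dom G n0).
  have := (let: And3 e _ _ := hst in e) p hp; rewrite h0 inE => /eqP en; subst n0.
  exists C0; split; [exact: reach_refl| split => //].
  by case: hst.
have h1 : C1 p = [set m].
  by case: hst => _ _ ->; rewrite ffunE hp.
have [K3 [r3 [e3 en3]]] := IH h1 h2.
exists K3; split => //; exact: reach_trans (reach_step hst) r3.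
Qed.

Lemma fin_cfg (P N R : finType) (G : negotiation P N R) K :
  wf_negotiation G -> good G K -> enabled G (n_fin G) K -> K = C_fin G.
Proof.
case=> _ _ [_ hdf] _ _ Hg Hen; apply/ffunP => q; rewrite ffunE.
have [x [hx _]] := Hg q.
have := Hen q; rewrite hdf in_setT hx inE => /(_ isT) /eqP ->.
by [].
Qed.

Theorem lemma2p3 (P N R : finType) (G : negotiation P N R) :
  wf_negotiation G ->
  deterministic G ->
  (forall n, local_reach G (n_init G) n ->
     forall p, p \in dom G n -> p_reach G p n (n_fin G)) ->
  (~ sound G <-> exists s C, is_run G (C_init G) s C /\ deadlock G C).
Proof.
move=> Hwf Hdet Hpath; split; last first.
  move=> [s [C [HC HD]]] Hs; have [s' Hs'] := Hs s C HC.
  inversion Hs'; subst.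
    apply: (HD (n_fin G)) => p _; by rewrite ffunE inE.
  by move: H; case: na {Hs' H0} => n a [hen _ _]; apply: (HD n).
move=> Hns.
have [s [C [HC HnC]]] : exists s C, is_run G (C_init G) s C /\
    ~ exists s', is_run G C s' (C_fin G).
  apply: NNPP => H; apply: Hns => s C Hr; apply: NNPP => H2; apply: H.
  by exists s, C.
apply: NNPP => Hnd.
have nodl : forall C', reach G (C_init G) C' -> exists n, enabled G n C'.
  move=> C' [s1 h1]; apply: NNPP => H; apply: Hnd; exists s1, C'; split => //.
  move=> n hn; apply: H; by exists n.
have [K [HK Hterm]] := terminal_exists G C.
have HKr : reach G (C_init G) K by apply: reach_trans HK; exists s.
have gK : good G K by have [s1 h1] := HKr; exact: good_run Hdet (good_init G) h1.
have [n Hn] := nodl K HKr.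
have Hnf : n != n_fin G.
  apply/eqP => e; subst n; apply: HnC.
  have := fin_cfg Hwf gK Hn => e; subst K; exact: HK.
have [p hp] : exists p, p \in dom G n.
  case: Hwf => hd _ _ _ _; exact/set0Pn.
have [x [hKp hloc]] := gK p.
have := Hn p hp; rewrite hKp inE => /eqP ex; subst x.
have Hpr := Hpath n hloc p hp.
pose Q m := exists K', reach G K K' /\ K' p = [set m].
have HQ : forall m m', (exists a, edge G p a m m') -> Q m -> Q m'.
  move=> m m' [a [ha hpm hm']] [K' [hKK' hK'p]].
  have [K3 [h3 [h3p h3e]]] :
      exists K3, reach G K K3 /\ K3 p = [set m] /\ enabled G m K3.
    case: (eqVneq m n) => [->|hmn].
      by exists K; split; [exact: reach_refl|].
    have [s2 hs2] := Hterm K' hKK'.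
    have hne : K p != [set m]
      by rewrite hKp; apply/negP => /eqP/set1_inj e; rewrite e eqxx in hmn.
    have [K3 [r3 rest]] := leave hs2 hK'p hne.
    exists K3; split => //; exact: reach_trans hKK' r3.
  pose K4 : config P N := [ffun q => if q \in dom G m then delta G m a q else K3 q].
  have st : step G K3 (m, a) K4 by [].
  exists K4; split; first exact: reach_trans h3 (reach_step st).
  rewrite /K4 ffunE hpm.
  have /eqP/cards1P [y hy] := Hdet m a p hpm ha.
  by move: hm'; rewrite hy inE => /eqP ->.
have Qfin : Q (n_fin G).
  have Qn : Q n by exists K; split; [exact: reach_refl|].
  have H1 := clos_rt_rt1n _ _ _ _ Hpr; move: H1 Qn; clear Hpr.
  elim=> [//|x y z hxy _ IH] Qx; apply: IH; exact: HQ hxy Qx.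
have [K' [hKK' hK'p]] := Qfin.
have [s2 hs2] := Hterm K' hKK'.
have hne : K p != [set n_fin G]
  by rewrite hKp; apply/negP => /eqP/set1_inj e; rewrite e eqxx in Hnf.
have [K3 [r3 [_ e3]]] := leave hs2 hK'p hne.
have r3' : reach G C K3 by apply: reach_trans HK (reach_trans hKK' r3).
have g3 : good G K3.
  have [s4 h4] := reach_trans HKr (reach_trans hKK' r3).
  exact: good_run Hdet (good_init G) h4.
have := fin_cfg Hwf g3 e3 => e; subst K3.
exact: HnC r3'.
Qed.
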